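(* Let $q=c_{34}x_1x_2+c_{24}x_1x_3+c_{23}x_1x_4+c_{14}x_2x_3+c_{13}x_2x_4+c_{12}x_3x_4\in\mathbb{R}[x_1,x_2,x_3,x_4]$ be Lorentzian. Then for every $r\in\mathbb{R}$, \[ (r+1)\,c_{14}c_{23}+r(r+1)\,c_{13}c_{24}\;\ge\; r\,c_{12}c_{34}. \]
   Context: A homogeneous quadratic polynomial is Lorentzian if its coefficients are nonnegative, its support is M-convex (for exponent vectors $\alpha,\beta$ in the support and $i$ with $\alpha_i>\beta_i$ there is $j$ with $\alpha_j<\beta_j$ and $\alpha-e_i+e_j$ in the support), and its Hessian matrix has at most one positive eigenvalue. *)

(* Defs.v *)
From HB Require Import structures.
From mathcomp Require Import all_boot all_order all_algebra.
From mathcomp Require Import reals.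
From mathcomp Require Import mpoly.
Set Implicit Arguments.
Unset Strict Implicit.
Unset Printing Implicit Defensive.
Import Order.TTheory GRing.Theory Num.Theory.
Local Open Scope ring_scope.

Section Lorentzian.
Variables (R : realType) (n : nat).
Implicit Types (p : {mpoly R[n]}).

Definition hessian_at p (x : 'I_n -> R) : 'M[R]_n :=
  \matrix_(i, j) (mderiv j (mderiv i p)).@[x].

(* The Hessian of a homogeneous quadratic is constant; we take it at 0. *)
Definition hessian p : 'M[R]_n := hessian_at p (fun _ => 0).

(* "At most one positive eigenvalue" (counted with multiplicity):
   no two positive roots a, b (a = b allowed, i.e. a double root) of the
   characteristic polynomial. *)
Definition at_most_one_pos_eigenvalue (A : 'M[R]_n) : Prop :=
  forall a b : R, 0 < a -> 0 < b ->
    ~~ (('X - a%:P) * ('X - b%:P) %| char_poly A).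

Definition M_convex_support p : Prop :=
  forall (a b : 'X_{1..n}), a \in msupp p -> b \in msupp p ->
  forall i : 'I_n, (b i < a i)%N ->
    exists j : 'I_n, (a j < b j)%N /\ ((a - U_(i) + U_(j))%MM \in msupp p).

Definition nonneg_coeffs p : Prop := forall m : 'X_{1..n}, 0 <= p@_m.

Definition lorentzian_quadratic p : Prop :=
  [/\ p \is 2.-homog, nonneg_coeffs p, M_convex_support p
    & at_most_one_pos_eigenvalue (hessian p)].

End Lorentzian.

(* q = c34 x1x2 + c24 x1x3 + c23 x1x4 + c14 x2x3 + c13 x2x4 + c12 x3x4,
   with x1..x4 = 'X_0..'X_3. *)
Definition q4 (R : realType) (c12 c13 c14 c23 c24 c34 : R) : {mpoly R[4]} :=
  c34 *: ('X_0 * 'X_1) + c24 *: ('X_0 * 'X_2) + c23 *: ('X_0 * 'X_3)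
  + c14 *: ('X_1 * 'X_2) + c13 *: ('X_1 * 'X_3) + c12 *: ('X_2 * 'X_3).

(* Main.v *)
Require Import Defs.
From HB Require Import structures.
From mathcomp Require Import all_boot all_order all_algebra.
From mathcomp Require Import reals.
From mathcomp Require Import mpoly.
From mathcomp Require Import ring lra.
Import Order.TTheory GRing.Theory Num.Theory.
Local Open Scope ring_scope.

Lemma mx_nat {K : Type} {n} (A : 'M[K]_n.+1) : A = \matrix_(i, j) A (inord (val i)) (inord (val j)).
Proof. by apply/matrixP=> i j; rewrite mxE !inord_val. Qed.

Lemma det2 (K : comPzRingType) (A : 'M[K]_2) :
  let B i j := A (inord i) (inord j) in
  \det A = B 0 0 * B 1 1 - B 0 1 * B 1 0.
Proof.
move=> B; rewrite [in LHS](mx_nat A).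
rewrite (expand_det_row _ ord0) !big_ord_recr big_ord0 /= /cofactor.
rewrite !det_mx11 !mxE /=. rewrite /B. ring.
Qed.
Lemma det3 (K : comPzRingType) (A : 'M[K]_3) :
  let B i j := A (inord i) (inord j) in
  \det A = B 0 0 * (B 1 1 * B 2 2 - B 1 2 * B 2 1)
         - B 0 1 * (B 1 0 * B 2 2 - B 1 2 * B 2 0)
         + B 0 2 * (B 1 0 * B 2 1 - B 1 1 * B 2 0).
Proof.
move=> B; rewrite [in LHS](mx_nat A).
rewrite (expand_det_row _ ord0) !big_ord_recr big_ord0 /= /cofactor.
rewrite !det2 !mxE /= !inordK //=; rewrite /B; ring.
Qed.

Definition d3 {K : comPzRingType} (B : nat -> nat -> K) r0 r1 r2 c0 c1 c2 :=
  B r0 c0 * (B r1 c1 * B r2 c2 - B r1 c2 * B r2 c1)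
- B r0 c1 * (B r1 c0 * B r2 c2 - B r1 c2 * B r2 c0)
+ B r0 c2 * (B r1 c0 * B r2 c1 - B r1 c1 * B r2 c0).
Lemma det4 (K : comPzRingType) (A : 'M[K]_4) :
  let B i j := A (inord i) (inord j) in
  \det A = B 0 0 * d3 B 1 2 3 1 2 3 - B 0 1 * d3 B 1 2 3 0 2 3
         + B 0 2 * d3 B 1 2 3 0 1 3 - B 0 3 * d3 B 1 2 3 0 1 2.
Proof.
move=> B; rewrite [in LHS](mx_nat A).
rewrite (expand_det_row _ ord0) !big_ord_recr big_ord0 /= /cofactor.
rewrite !det3 !mxE /= !inordK //=; rewrite /B /d3; ring.
Qed.
Lemma dX (R : comNzRingType) n (i k : 'I_n) :
  mderiv i ('X_k : {mpoly R[n]}) = ((k == i)%:R)%:MP.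
Proof.
rewrite mderivX mnm1E; case: eqP => [->|_].
  have ->: (U_(i) - U_(i))%MM = 0%MM by apply/mnmP=> x; rewrite !mnmE subnn.
  by rewrite mpolyX0 scale1r.
by rewrite scale0r.
Qed.
Lemma d2XX (R : comNzRingType) n (i j k l : 'I_n) :
  mderiv j (mderiv i ('X_k * 'X_l : {mpoly R[n]})) =
   (((k == i) && (l == j)) + ((l == i) && (k == j)))%:R%:MP.
Proof.
rewrite mderivM !dX mderivD !mderivM !dX !mderivC !mulr0 !mul0r !addr0 !add0r.
rewrite -!rmorphM -rmorphD /=; congr (_%:MP).
rewrite -natrD; congr (_%:R); by do 4 case: eqP.
Qed.

Lemma hessE (R : realType) (c12 c13 c14 c23 c24 c34 : R) i j :
  hessian (q4 c12 c13 c14 c23 c24 c34) i j =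
  c34 * ((0 == i) && (1 == j) + (1 == i) && (0 == j))%:R +
  c24 * ((0 == i) && (2 == j) + (2 == i) && (0 == j))%:R +
  c23 * ((0 == i) && (3 == j) + (3 == i) && (0 == j))%:R +
  c14 * ((1 == i) && (2 == j) + (2 == i) && (1 == j))%:R +
  c13 * ((1 == i) && (3 == j) + (3 == i) && (1 == j))%:R +
  c12 * ((2 == i) && (3 == j) + (3 == i) && (2 == j))%:R.
Proof.
by rewrite /hessian /hessian_at mxE /q4 !mderivD !mderivZ !d2XX !mevalD !mevalZ !mevalC.
Qed.

Lemma ord_inord (x : 'I_4) a : (a < 4)%N -> (x == inord a) = (val x == a).
Proof. move=> ha; apply/eqP/eqP => [->|h]; first exact: inordK.
apply: val_inj; rewrite h; symmetry; exact: inordK. Qed.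
Lemma inord_eqn a b : (a < 4)%N -> (b < 4)%N -> ((inord a : 'I_4) == inord b) = (a == b).
Proof. move=> ha hb; rewrite ord_inord //; congr (_ == _); exact: inordK. Qed.

Lemma hessE' (R : realType) (c12 c13 c14 c23 c24 c34 : R) a b :
  (a < 4)%N -> (b < 4)%N ->
  hessian (q4 c12 c13 c14 c23 c24 c34) (inord a) (inord b) =
  c34 * ((0 == a) && (1 == b) + (1 == a) && (0 == b))%:R +
  c24 * ((0 == a) && (2 == b) + (2 == a) && (0 == b))%:R +
  c23 * ((0 == a) && (3 == b) + (3 == a) && (0 == b))%:R +
  c14 * ((1 == a) && (2 == b) + (2 == a) && (1 == b))%:R +
  c13 * ((1 == a) && (3 == b) + (3 == a) && (1 == b))%:R +
  c12 * ((2 == a) && (3 == b) + (3 == a) && (2 == b))%:R.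
Proof. by move=> ha hb; rewrite hessE !ord_inord. Qed.


Lemma hessD (R : realType) (c12 c13 c14 c23 c24 c34 : R) a b :
  (a < 4)%N -> (b < 4)%N ->
  (mderiv (inord b) (mderiv (inord a) (q4 c12 c13 c14 c23 c24 c34))).@[fun _ => 0] =
  c34 * ((0 == a) && (1 == b) + (1 == a) && (0 == b))%:R +
  c24 * ((0 == a) && (2 == b) + (2 == a) && (0 == b))%:R +
  c23 * ((0 == a) && (3 == b) + (3 == a) && (0 == b))%:R +
  c14 * ((1 == a) && (2 == b) + (2 == a) && (1 == b))%:R +
  c13 * ((1 == a) && (3 == b) + (3 == a) && (1 == b))%:R +
  c12 * ((2 == a) && (3 == b) + (3 == a) && (2 == b))%:R.
Proof. move=> ha hb; have := hessE' R c12 c13 c14 c23 c24 c34 a b ha hb. by rewrite /hessian /hessian_at mxE. Qed.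
Lemma det4f (K : comPzRingType) (f : nat -> nat -> K) :
  \det (\matrix_(i < 4, j < 4) f i j) =
  f 0 0 * d3 f 1 2 3 1 2 3 - f 0 1 * d3 f 1 2 3 0 2 3
  + f 0 2 * d3 f 1 2 3 0 1 3 - f 0 3 * d3 f 1 2 3 0 1 2.
Proof. by rewrite det4 /d3 !mxE !inordK. Qed.

Definition hv (R : realType) (c12 c13 c14 c23 c24 c34 : R) (a b : nat) : R :=
  match a, b with
  | 0, 1 | 1, 0 => c34
  | 0, 2 | 2, 0 => c24
  | 0, 3 | 3, 0 => c23
  | 1, 2 | 2, 1 => c14
  | 1, 3 | 3, 1 => c13
  | 2, 3 | 3, 2 => c12
  | _, _ => 0
  end.
Arguments hv {R}.

Lemma hv_entry (R : realType) (c12 c13 c14 c23 c24 c34 : R) (i j : 'I_4) :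
  hessian (q4 c12 c13 c14 c23 c24 c34) i j = hv c12 c13 c14 c23 c24 c34 i j.
Proof.
rewrite -(inord_val i) -(inord_val j) hessE' // !inordK //.
case: i j => [[|[|[|[|?]]]] ?] [[|[|[|[|?]]]] ?] //=;
  by rewrite ?mulr0 ?mulr1 ?addr0 ?add0r.
Qed.

Definition Fp (R : realType) (c12 c13 c14 c23 c24 c34 : R) (a b : nat) : {poly R} :=
  if a == b then 'X else - (hv c12 c13 c14 c23 c24 c34 a b)%:P.
Arguments Fp {R}.

Lemma cpmx (R : realType) (c12 c13 c14 c23 c24 c34 : R) :
  char_poly_mx (hessian (q4 c12 c13 c14 c23 c24 c34)) =
  \matrix_(i < 4, j < 4) Fp c12 c13 c14 c23 c24 c34 i j.
Proof.
have := hv_entry R c12 c13 c14 c23 c24 c34; move: (hessian _) => H hH.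
apply/matrixP => i j; rewrite /char_poly_mx !mxE hH /Fp.
case: (eqVneq i j) => [<-|ne].
  by rewrite eqxx mulr1n; case: i => [[|[|[|[|?]]]] ?] //=; rewrite subr0.
by rewrite mulr0n sub0r; move: ne; rewrite -val_eqE => /negbTE ->.
Qed.

Lemma cpE (R : realType) (c12 c13 c14 c23 c24 c34 : R) :
  char_poly (hessian (q4 c12 c13 c14 c23 c24 c34)) =
  'X^4 - (c12^+2 + c13^+2 + c14^+2 + c23^+2 + c24^+2 + c34^+2)%:P * 'X^2
  - (2 * (c34*c24*c14 + c34*c23*c13 + c24*c23*c12 + c14*c13*c12))%:P * 'X
  + ((c14*c23)^+2 + (c13*c24)^+2 + (c12*c34)^+2 - 2*(c14*c23)*(c13*c24)
     - 2*(c13*c24)*(c12*c34) - 2*(c12*c34)*(c14*c23))%:P.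
Proof.
rewrite /char_poly cpmx det4f.
transitivity (
  'X *
  ('X * ('X * 'X - - c12%:P * - c12%:P) -
   - c14%:P * (- c14%:P * 'X - - c12%:P * - c13%:P) +
   - c13%:P * (- c14%:P * - c12%:P - 'X * - c13%:P)) -
  - c34%:P *
  (- c34%:P * ('X * 'X - - c12%:P * - c12%:P) -
   - c14%:P * (- c24%:P * 'X - - c12%:P * - c23%:P) +
   - c13%:P * (- c24%:P * - c12%:P - 'X * - c23%:P)) +
  - c24%:P *
  (- c34%:P * (- c14%:P * 'X - - c12%:P * - c13%:P) -
   'X * (- c24%:P * 'X - - c12%:P * - c23%:P) +
   - c13%:P * (- c24%:P * - c13%:P - - c14%:P * - c23%:P)) -
  - c23%:P *
  (- c34%:P * (- c14%:P * - c12%:P - 'X * - c13%:P) -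
   'X * (- c24%:P * - c12%:P - 'X * - c23%:P) +
   - c14%:P * (- c24%:P * - c13%:P - - c14%:P * - c23%:P))); first reflexivity.
rewrite !(rmorphD, rmorphN, rmorphM, rmorphB, rmorphXn) ?polyC_natr ?polyC1.
ring.
Qed.

Lemma coefq (R : realType) (c12 c13 c14 c23 c24 c34 : R) (k l : 'I_4) :
  (q4 c12 c13 c14 c23 c24 c34)@_(U_(k) + U_(l))%MM =
  c34 * ((U_(0%R : 'I_4) + U_(1%R : 'I_4))%MM == (U_(k) + U_(l))%MM)%:R
  + c24 * ((U_(0%R : 'I_4) + U_(2%R : 'I_4))%MM == (U_(k) + U_(l))%MM)%:R
  + c23 * ((U_(0%R : 'I_4) + U_(3%R : 'I_4))%MM == (U_(k) + U_(l))%MM)%:R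
  + c14 * ((U_(1%R : 'I_4) + U_(2%R : 'I_4))%MM == (U_(k) + U_(l))%MM)%:R
  + c13 * ((U_(1%R : 'I_4) + U_(3%R : 'I_4))%MM == (U_(k) + U_(l))%MM)%:R
  + c12 * ((U_(2%R : 'I_4) + U_(3%R : 'I_4))%MM == (U_(k) + U_(l))%MM)%:R.
Proof. by rewrite /q4 !mcoeffD !mcoeffZ -!mpolyXD !mcoeffX. Qed.

Lemma meq4E (m1 m2 : 'X_{1..4}) :
  (m1 == m2) = [&& (m1 0%R == m2 0%R), (m1 1%R == m2 1%R), (m1 2%R == m2 2%R) & (m1 3%R == m2 3%R)].
Proof.
apply/eqP/and4P => [->|[/eqP h0 /eqP h1 /eqP h2 /eqP h3]]; first by rewrite !eqxx.
apply/mnmP => -[[|[|[|[|k]]]] hk] //.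
- by rewrite (_ : Ordinal hk = 0%R) //; apply: val_inj.
- by rewrite (_ : Ordinal hk = 1%R) //; apply: val_inj.
- by rewrite (_ : Ordinal hk = 2%R) //; apply: val_inj.
- by rewrite (_ : Ordinal hk = 3%R) //; apply: val_inj.
Qed.

Lemma coef_nonneg (R : realType) (c12 c13 c14 c23 c24 c34 : R) :
  nonneg_coeffs (q4 c12 c13 c14 c23 c24 c34) ->
  0 <= c12 /\ 0 <= c13 /\ 0 <= c14 /\ 0 <= c23 /\ 0 <= c24 /\ 0 <= c34.
Proof.
move=> nn.
have := nn (U_(0%R : 'I_4) + U_(1%R : 'I_4))%MM.
have := nn (U_(0%R : 'I_4) + U_(2%R : 'I_4))%MM.
have := nn (U_(0%R : 'I_4) + U_(3%R : 'I_4))%MM.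
have := nn (U_(1%R : 'I_4) + U_(2%R : 'I_4))%MM.
have := nn (U_(1%R : 'I_4) + U_(3%R : 'I_4))%MM.
have := nn (U_(2%R : 'I_4) + U_(3%R : 'I_4))%MM.
rewrite !coefq !meq4E !mnmDE !mnm1E /=.
rewrite ?mulr0 ?mulr1 ?addr0 ?add0r.
by move=> *; do !split.
Qed.

Lemma dvd2 (R : realType) (p : {poly R}) x y : x != y -> root p x -> root p y ->
  ('X - x%:P) * ('X - y%:P) %| p.
Proof.
move=> nxy /factor_theorem [q ->] ry.
have: root q y.
  by move: ry; rewrite rootM root_XsubC eq_sym (negbTE nxy) orbF.
case/factor_theorem => q' ->.
by rewrite -mulrA [(_ - y%:P) * _]mulrC dvdp_mulIr.
Qed.

Lemma quartic_key (R : realType) (p : {poly R}) S T D :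
  p = 'X^4 - S%:P * 'X^2 - (2*T)%:P * 'X + D%:P ->
  0 <= T -> 4 * D <= S^+2 -> 0 <= S ->
  (forall a b, 0 < a -> 0 < b -> ~~ (('X - a%:P) * ('X - b%:P) %| p)) ->
  D <= 0.
Proof.
move=> hp hT hSD hS nodiv; rewrite leNgt; apply/negP => hD.
have ev t : p.[t] = t^+4 - S * t^+2 - 2 * T * t + D by rewrite hp !hornerE.
have Spos : 0 < S by rewrite lt_neqAle hS andbT; apply/eqP => S0; move: hSD; rewrite -S0; lra.
pose t0 := Num.sqrt (S / 2).
have t0pos : 0 < t0 by rewrite sqrtr_gt0; lra.
have t02 : t0 ^+ 2 = S / 2 by rewrite sqr_sqrtr //; lra.
have pt0 : p.[t0] = D - S^+2 / 4 - 2 * T * t0.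
  rewrite ev; have -> : t0 ^+ 4 = (t0 ^+ 2) ^+ 2 by rewrite -exprM.
  by rewrite t02; field.
have Tt0 : 0 <= T * t0 by rewrite mulr_ge0 // ltW.
have : p.[t0] <= 0 by rewrite pt0; lra.
rewrite le_eqVlt => /orP [/eqP p0 | pneg].
- (* double root *)
  have hT0 : T * t0 = 0 by move: p0; rewrite pt0; lra.
  have T0 : T = 0 by move/eqP: hT0; rewrite mulf_eq0 (gt_eqF t0pos) orbF => /eqP.
  have S0 : S = 2 * t0 ^+ 2 by rewrite t02; field.
  have D0 : D = (t0 ^+ 2) ^+ 2 by move: p0; rewrite pt0 T0 S0; lra.
  move: (nodiv t0 t0 t0pos t0pos); rewrite hp T0 D0 S0.
  have -> : 'X^4 - (2 * t0 ^+ 2)%:P * 'X^2 - (2 * 0)%:P * 'X + ((t0 ^+ 2) ^+ 2)%:P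
     = ('X - t0%:P) * ('X - t0%:P) * (('X + t0%:P) * ('X + t0%:P)).
    rewrite mulr0 polyC0 mul0r subr0 ?polyC_exp ?polyCM ?polyC_exp.
    rewrite (_ : (2:R)%:P = 2%:R) ?polyC_natr //.
    ring.
  by rewrite dvdp_mulIl.
- (* two distinct roots *)
  pose t1 := t0 + S + 2 * T + 1.
  have t1ge : t0 <= t1 by rewrite /t1; lra.
  have pt1 : 0 <= p.[t1].
    rewrite ev.
    have h1 : 1 <= t1 by rewrite /t1; lra.
    have h2 : S + 2 * T + 1 <= t1 by rewrite /t1; lra.
    have h3 : t1 <= t1 ^+ 2 by rewrite expr2; nra.
    have h4 : 2 * T * t1 <= 2 * T * t1 ^+ 2 by nra.
    have -> : t1 ^+ 4 = t1 ^+ 2 * t1 ^+ 2 by rewrite -exprD.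
    nra.
  have hiv : p.[t0] <= 0 <= p.[t1] by rewrite (ltW pneg) pt1.
  have [x2 /andP [x2a x2b] rx2] := poly_ivt t1ge hiv.
  have [x1 /andP [x1a x1b] rx1] : exists2 x, 0 <= x <= t0 & root p x.
    have h0 : 0 <= t0 by exact: ltW.
    have hiv' : (- p).[0] <= 0 <= (- p).[t0].
      by rewrite !hornerN ev; apply/andP; split; lra.
    have [x hx rx] := poly_ivt h0 hiv'.
    by exists x => //; rewrite -rootN.
  have x1ne0 : x1 != 0.
    by apply/eqP => e; move: rx1; rewrite e /root ev !expr0n /= => /eqP; lra.
  have x1net : x1 != t0 by apply/eqP => e; move: rx1; rewrite e /root => /eqP; lra.
  have x2net : x2 != t0 by apply/eqP => e; move: rx2; rewrite e /root => /eqP; lra.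
  have x1pos : 0 < x1 by rewrite lt_neqAle eq_sym x1ne0.
  have x1lt : x1 < t0 by rewrite lt_neqAle x1net.
  have x2gt : t0 < x2 by rewrite lt_neqAle eq_sym x2net.
  have : x1 != x2 by apply/eqP => e; move: x1lt; rewrite e; lra.
  move=> /dvd2 /(_ rx1 rx2) => d.
  by move: (nodiv x1 x2 x1pos (lt_trans t0pos x2gt)); rewrite d.
Qed.

Lemma fin_ineq (R : realType) (a b c r : R) : 0 <= a -> 0 <= b -> 0 <= c ->
  a^+2 + b^+2 + c^+2 - 2*a*b - 2*b*c - 2*c*a <= 0 ->
  r * c <= (r + 1) * a + r * (r + 1) * b.
Proof.
move=> ha hb hc hD.
have [b0|bpos] := eqVneq b 0.
  rewrite b0 in hD *.
  have ac : (a - c)^+2 <= 0 by move: hD; rewrite !expr2; lra.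
  have : a - c = 0 by apply/eqP; rewrite -sqrf_eq0 eq_le ac sqr_ge0.
  move=> h; have -> : c = a by lra.
  nra.
have bp : 0 < b by rewrite lt_neqAle eq_sym bpos hb.
have key : 0 <= 4 * b * ((r + 1) * a + r * (r + 1) * b - r * c).
  have -> : 4 * b * ((r + 1) * a + r * (r + 1) * b - r * c)
     = (2 * b * r + (a + b - c))^+2 - (a^+2 + b^+2 + c^+2 - 2*a*b - 2*b*c - 2*c*a) by ring.
  have := sqr_ge0 (2 * b * r + (a + b - c)); lra.
have : 0 <= (r + 1) * a + r * (r + 1) * b - r * c.
  by rewrite -(pmulr_rge0 _ (_ : 0 < 4 * b)) ?mulrA //; lra.
lra.
Qed.

Lemma SD (R : realType) (c12 c13 c14 c23 c24 c34 : R) :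
  0 <= c12 -> 0 <= c13 -> 0 <= c14 -> 0 <= c23 -> 0 <= c24 -> 0 <= c34 ->
  4 * ((c14*c23)^+2 + (c13*c24)^+2 + (c12*c34)^+2 - 2*(c14*c23)*(c13*c24)
     - 2*(c13*c24)*(c12*c34) - 2*(c12*c34)*(c14*c23))
  <= (c12^+2 + c13^+2 + c14^+2 + c23^+2 + c24^+2 + c34^+2)^+2.
Proof.
move=> h1 h2 h3 h4 h5 h6.
set a := c14*c23; set b := c13*c24; set c := c12*c34.
have ha : 0 <= a by rewrite mulr_ge0.
have hb : 0 <= b by rewrite mulr_ge0.
have hc : 0 <= c by rewrite mulr_ge0.
set S := _ + c34^+2.
have hS : 2 * (a + b + c) <= S.
  have := sqr_ge0 (c14 - c23); have := sqr_ge0 (c13 - c24); have := sqr_ge0 (c12 - c34).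
  rewrite /S /a /b /c !expr2; lra.
have hS2 : (2 * (a + b + c))^+2 <= S^+2.
  by rewrite ler_pXn2r // ?nnegrE; lra.
move: hS2; rewrite !expr2; nra.
Qed.

Theorem lemma5p2 (R : realType) (c12 c13 c14 c23 c24 c34 : R) :
  lorentzian_quadratic (q4 c12 c13 c14 c23 c24 c34) ->
  forall r : R,
    (r + 1) * c14 * c23 + r * (r + 1) * c13 * c24 >= r * c12 * c34.
Proof.
move=> [hom nn mc amope] r.
have [h1 [h2 [h3 [h4 [h5 h6]]]]] := @coef_nonneg R _ _ _ _ _ _ nn.
have D0 := @quartic_key R _ _ _ _ (@cpE R c12 c13 c14 c23 c24 c34)
  (ltac:(by rewrite !addr_ge0 ?mulr_ge0))
  (@SD R _ _ _ _ _ _ h1 h2 h3 h4 h5 h6)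
  (ltac:(by rewrite !addr_ge0 ?sqr_ge0)) amope.
have := @fin_ineq R _ _ _ r (mulr_ge0 h3 h4) (mulr_ge0 h2 h5) (mulr_ge0 h1 h6) D0.
have -> : (r + 1) * c14 * c23 + r * (r + 1) * c13 * c24
  = (r + 1) * (c14 * c23) + r * (r + 1) * (c13 * c24) by ring.
have -> : r * c12 * c34 = r * (c12 * c34) by ring.
by [].
Qed.
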